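(* There is a class $\mathcal{C}$ of digraphs of bounded expansion such that for every constant $c$ we have $\gamma_1(G)\ge c$ for infinitely many $G\in\mathcal{C}$, and $\alpha_1(G)=2$ for all $G\in\mathcal{C}$.
   Context: Directed models and depth-$r$ minors: a digraph $H$ has a directed model in $G$ if there is a map $\delta$ assigning to each $v\in V(H)$ a subgraph $\delta(v)\subseteq G$ and to each arc $e$ of $H$ an arc $\delta(e)$ of $G$ with (1) branch sets pairwise disjoint; (2) if $e=(u,v)$ and $\delta(e)=(u',v')$ then $u'\in\delta(u)$, $v'\in\delta(v)$; (3) for each $v$, with $\mathrm{in}(\delta(v))$ (resp. $\mathrm{out}(\delta(v))$) the vertices of $\delta(v)$ on images of arcs entering (resp. leaving) $v$: every in-vertex reaches every out-vertex by a directed path in $\delta(v)$, some vertex of $\delta(v)$ reaches all out-vertices, and some vertex of $\delta(v)$ is reached from all in-vertices. $H$ is a depth-$r$ minor of $G$ if there is such a model in which all paths in branch sets have length at most $r$. $\nabla_r(G)$ is the maximum of $|E(H)|/|V(H)|$ over depth-$r$ minors $H$ of $G$; a class has bounded expansion if $\nabla_r(G)\le f(r)$ for some function $f$, all $r\ge0$, all $G$ in the class. $N_r^+(v)$ is the set of vertices $u$ such that $G$ has a directed path of length at most $r$ from $v$ to $u$ (including $v$). $\gamma_r(G)$ is the size of a smallest $X\subseteq V(G)$ with $N_r^+(X)=V(G)$. $\alpha_r(G)$ is the size of a largest set $Y\subseteq V(G)$ such that for all distinct $x,y\in Y$ there is no $u\in V(G)$ with $x,y\in N_r^+(u)$. 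*)

(* Defs.v *)
From HB Require Import structures.
From mathcomp Require Import all_boot all_order all_algebra.
From Stdlib Require List.
Set Implicit Arguments. Unset Strict Implicit. Unset Printing Implicit Defensive.
Import Order.TTheory GRing.Theory Num.Theory.

(* A (finite, simple, loopless) digraph on vertex set 'I_n; arcs are a finite
   set of ordered pairs, so Leibniz equality of digraphs is extensional. *)
Record digraph := Digraph {
  dn : nat;
  darcs : {set 'I_dn * 'I_dn};
  dloopless : [forall x : 'I_dn, (x, x) \notin darcs] }.

Definition arcrel (n : nat) (A : {set 'I_n * 'I_n}) : rel 'I_n :=
  fun a b => (a, b) \in A.

Definition reach (n : nat) (A : {set 'I_n * 'I_n}) (x y : 'I_n) : bool :=
  connect (arcrel A) x y.

Definition depth_minor (r : nat) (H G : digraph) : Prop :=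
  exists (S : 'I_(dn H) -> {set 'I_(dn G)})
         (A : 'I_(dn H) -> {set 'I_(dn G) * 'I_(dn G)})
         (d : 'I_(dn H) * 'I_(dn H) -> 'I_(dn G) * 'I_(dn G)),
  [/\
   (forall v a, a \in A v -> [/\ a \in darcs G, a.1 \in S v & a.2 \in S v]),
   (forall u v, u != v -> [disjoint S u & S v]),
   (forall e, e \in darcs H ->
      [/\ d e \in darcs G, (d e).1 \in S e.1 & (d e).2 \in S e.2]),
   (forall v,
      let inv := [set (d e).2 | e in [set e in darcs H | e.2 == v]] in
      let outv := [set (d e).1 | e in [set e in darcs H | e.1 == v]] in
      [/\ (forall x y, x \in inv -> y \in outv -> reach (A v) x y),
          (exists2 z, z \in S v & forall y, y \in outv -> reach (A v) z y) &
          (exists2 z, z \in S v & forall x, x \in inv -> reach (A v) x z)]) &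
   (forall v (x : 'I_(dn G)) (p : seq 'I_(dn G)),
      x \in S v -> path (arcrel (A v)) x p -> uniq (x :: p) -> size p <= r)].

(* nabla_r(G) <= f r for all G in C, unfolded: every depth-r minor H of G
   satisfies |E(H)| / |V(H)| <= f r  (i.e. |E(H)| <= f r * |V(H)|). *)
Definition bounded_expansion (C : digraph -> Prop) : Prop :=
  exists f : nat -> rat, forall (r : nat) (G H : digraph),
    C G -> depth_minor r H G ->
    ((#|darcs H|)%:R <= f r * (dn H)%:R)%R.

(* N_r^+(v): vertices u reachable from v by a directed path of length <= r *)
Definition outball (G : digraph) (r : nat) (v : 'I_(dn G)) : {set 'I_(dn G)} :=
  [set u | [exists p : (dn G).-tuple 'I_(dn G), exists k : 'I_(dn G).+1,
     let q := take k p in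
     [&& path (arcrel (darcs G)) v q, uniq (v :: q), last v q == u & k <= r]]].

Definition outballS (G : digraph) (r : nat) (X : {set 'I_(dn G)}) :=
  \bigcup_(x in X) outball r x.

Definition gamma (r : nat) (G : digraph) : nat :=
  \big[minn/dn G]_(X : {set 'I_(dn G)} | outballS r X == setT) #|X|.

Definition scattered (G : digraph) (r : nat) (Y : {set 'I_(dn G)}) : bool :=
  [forall x in Y, forall y in Y, (x != y) ==>
     ~~ [exists u, (x \in outball r u) && (y \in outball r u)]].

Definition alpha (r : nat) (G : digraph) : nat :=
  \max_(Y : {set 'I_(dn G)} | scattered r Y) #|Y|.

Definition infinitely_many (P : digraph -> Prop) : Prop :=
  forall s : list digraph, exists G, P G /\ ~ List.In G s.

(* Main.v *)
Require Import Defs.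
From mathcomp Require Import all_boot all_order all_algebra zify.
Set Implicit Arguments. Unset Strict Implicit. Unset Printing Implicit Defensive.
Import GRing.Theory Num.Theory.

Lemma take1_nseq (T : Type) m (u : T) : 0 < m -> take 1 (nseq m u) = [:: u].
Proof. by case: m => //= m _; rewrite take0. Qed.

Lemma outball1P (G : digraph) (x u : 'I_(dn G)) :
  u \in outball 1 x -> u = x \/ (x, u) \in darcs G.
Proof.
rewrite inE => /existsP [[p Hs] /existsP [k /and4P [Hp _ /eqP Hl Hk]]].
case: k Hk Hp Hl => [[|[|k]] Hk] //= _; case: p Hs => [|a p] Hs //=.
- by move=> _ <-; left.
- by move=> _ <-; left.
- by move=> _ <-; left.
- by rewrite take0 /= andbT => Ha <-; right.
Qed.

Lemma loopless_neq (G : digraph) (x u : 'I_(dn G)) : (x, u) \in darcs G -> x != u.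
Proof.
apply: contraTneq => ->.
by have /forallP := dloopless G; apply.
Qed.

Lemma outball1_self (G : digraph) (x : 'I_(dn G)) : x \in outball 1 x.
Proof.
rewrite inE; apply/existsP; exists (nseq_tuple (dn G) x).
apply/existsP; exists ord0 => /=.
by rewrite take0 /= eqxx.
Qed.

Lemma outball1_arc (G : digraph) (x u : 'I_(dn G)) :
  (x, u) \in darcs G -> u \in outball 1 x.
Proof.
move=> Hxu; rewrite inE; apply/existsP; exists (nseq_tuple (dn G) u).
have h0 : 0 < dn G by apply: leq_ltn_trans (ltn_ord x).
have h1 : 1 < (dn G).+1 by [].
apply/existsP; exists (Ordinal h1) => /=.
rewrite take1_nseq //= andbT eqxx /= /arcrel Hxu /=.
by rewrite inE (loopless_neq Hxu).
Qed.

Definition t1 n (a : nat) := (a - n.+1) %/ n + 1.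
Definition t2 n (a : nat) := (a - n.+1) %% n + 1.
Definition arcn n (a b : nat) : bool :=
  ((a == 0) && (n < b)) || [&& n < a, 0 < b, b <= n & (b == t1 n a) || (b == t2 n a)].

Lemma arcn_irr n a : arcn n a a = false.
Proof. rewrite /arcn; apply/negbTE; apply/negP => /orP [/andP [/eqP -> //]|/and4P [h1 _ h2 _]]. lia. Qed.

Lemma arcn_to0 n a : arcn n a 0 = false.
Proof. by rewrite /arcn ltn0 ltnn andbF /= andbF. Qed.

Lemma arcn_from n a b : arcn n a b -> (a = 0) \/ (n < a).
Proof. by case/orP => [/andP [/eqP -> _]|/and4P [h _ _ _]]; [left|right]. Qed.

Lemma arcn_W n a b : arcn n a b -> a != 0 -> [&& 0 < b, b <= n & (b == t1 n a) || (b == t2 n a)].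
Proof. by case/orP => [/andP [-> _]//|/and4P [_ -> -> ->]]. Qed.

Lemma Gr_loopless n : [forall x : 'I_(n + n * n).+1,
   (x, x) \notin [set p : 'I_(n + n * n).+1 * 'I_(n + n * n).+1 | arcn n p.1 p.2]].
Proof. by apply/forallP => x; rewrite inE /= arcn_irr. Qed.

Definition Gr n : digraph := @Digraph (n + n * n).+1 _ (Gr_loopless n).

Lemma Gr_arc n (x y : 'I_(dn (Gr n))) : ((x, y) \in darcs (Gr n)) = arcn n x y.
Proof. by rewrite inE. Qed.

Lemma reach_to_W n (A : {set 'I_(dn (Gr n)) * 'I_(dn (Gr n))}) (z y : 'I_(dn (Gr n))) :
  (forall a, a \in A -> a \in darcs (Gr n)) -> n < y -> nat_of_ord z != 0 ->
  reach A z y -> z = y.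
Proof.
move=> HA Hy Hz /connectP [p Hp Hl].
elim/last_ind: p Hp Hl => [_ -> //|p w _].
rewrite rcons_path last_rcons => /andP [Hp Ha] Hw; subst w.
move: (HA _ Ha); rewrite Gr_arc /=.
case/orP => [/andP [/eqP Hl0 _]|/and4P [_ _ h _]]; last by rewrite ltnNge h in Hy.
clear Ha; elim/last_ind: p Hp Hl0 => [_ /= Hz0|p w _]; first by rewrite Hz0 in Hz.
rewrite rcons_path last_rcons => /andP [_ Ha'] Hw.
move: (HA _ Ha'); rewrite Gr_arc /= Hw.
by rewrite arcn_to0.
Qed.

Lemma minor_bound n r H : depth_minor r H (Gr n) -> #|darcs H| <= 3 * dn H.
Proof.
move=> [S [A [d [HA Hdisj Hd H3 _]]]].
set m := dn H.
pose out v := [set e in darcs H | e.1 == v].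
have Hsum : #|darcs H| = \sum_(v < m) #|out v|.
  rewrite -sum1_card (partition_big (fun e => e.1) xpredT) //=.
  apply: eq_bigr => v _; rewrite -sum1_card; apply: eq_bigl => e.
  by rewrite inE.
have Hout_m : forall v, #|out v| <= m.
  move=> v; rewrite -(card_in_imset (f := snd)); last first.
    move=> [a b] [a' b']; rewrite !inE /= => /andP [_ /eqP ->] /andP [_ /eqP ->].
    by move=> ->.
  by rewrite -[m]card_ord max_card.
pose P v := [exists x in S v, nat_of_ord x == 0].
have Hout_2 : forall v, ~~ P v -> #|out v| <= 2.
  move=> v HPv.
  have Hnz : forall x, x \in S v -> nat_of_ord x != 0.
    move=> x Hx; apply/negP => Hx0; move/negP: HPv; apply.
    by apply/existsP; exists x; rewrite Hx.
  case: (set_0Vmem (out v)) => [->|[e0 He0]]; first by rewrite cards0.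
  have := H3 v => /= -[_ [z Hz Hzr] _].
  have Hze : forall e, e \in out v -> (d e).1 = z.
    move=> e He; move: (He); rewrite inE => /andP [HeH /eqP He1].
    have [Hde Hd1 Hd2] := Hd e HeH.
    rewrite He1 in Hd1.
    symmetry; apply: (reach_to_W (A := A v)).
    - by move=> a /HA [].
    - move: Hde; rewrite [d e]surjective_pairing Gr_arc => /arcn_from [H0|//].
      by move: (Hnz _ Hd1); rewrite H0.
    - exact: Hnz.
    - by apply: Hzr; apply/imsetP; exists e => //.
  rewrite -(card_in_imset (f := fun e => (d e).2)); last first.
    move=> e e' He He' Heq.
    move: (He) (He'); rewrite !inE => /andP [HeH /eqP He1] /andP [HeH' /eqP He1'].
    have [_ _ Hd2] := Hd e HeH; have [_ _ Hd2'] := Hd e' HeH'.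
    have E2 : e.2 = e'.2.
      apply/eqP; apply/negPn/negP => Hne.
      by move: (disjointFr (Hdisj _ _ Hne) Hd2); rewrite Heq Hd2'.
    by move: He1 He1' E2; case: e {He HeH Hd2 Heq} => a b; case: e' {He' HeH' Hd2'} => a' b' /= -> -> ->.
  apply: leq_trans (_ : #|[set (@inord (n + n * n) (t1 n z)); (@inord (n + n * n) (t2 n z))]| <= 2); last first.
    by rewrite cards2; case: (_ != _).
  apply: subset_leq_card; apply/subsetP => u /imsetP [e He ->].
  have [Hde _ _] := Hd e (elimT andP (eqbLR (in_set _ _) He)).1.
  have := Hde; rewrite [d e]surjective_pairing Gr_arc (Hze e He).
  move/arcn_W => /(_ (Hnz _ Hz)) /and3P [_ _ /orP [] /eqP Hu]; rewrite !inE; apply/orP.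
  - by left; apply/eqP; rewrite -Hu inord_val.
  - by right; apply/eqP; rewrite -Hu inord_val.
have HP1 : #|[set v | P v]| <= 1.
  apply/card_le1_eqP => v v'; rewrite !inE => /existsP [x /andP [Hx Hx0]] /existsP [x' /andP [Hx' Hx0']].
  apply/eqP; apply/negPn/negP => Hne.
  have Exx : x = x' by apply: ord_inj; rewrite (eqP Hx0) (eqP Hx0').
  by move: (disjointFr (Hdisj _ _ Hne) Hx'); rewrite -Exx Hx.
rewrite Hsum.
apply: (@leq_trans (\sum_(v < m) (2 + (if v \in [set v | P v] then m else 0)))).
  apply: leq_sum => v _; rewrite inE; case: (boolP (P v)) => Hv.
    by apply: leq_trans (Hout_m v) (leq_addl _ _).
  by rewrite addn0 Hout_2.
rewrite big_split /= -big_mkcond !sum_nat_const card_ord.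
move: HP1; set k := #|_|; nia.
Qed.

Lemma gamma_lb n (X : {set 'I_(dn (Gr n))}) : outballS 1 X == setT -> n <= 3 * #|X|.
Proof.
move=> HX.
pose T1 (x : 'I_(dn (Gr n))) := @inord (n + n * n) (t1 n x).
pose T2 (x : 'I_(dn (Gr n))) := @inord (n + n * n) (t2 n x).
pose B := [set @inord (n + n * n) i.+1 | i : 'I_n].
have HB : #|B| = n.
  rewrite card_imset ?card_ord // => i j Hij; apply: ord_inj.
  have := congr1 (@nat_of_ord _) Hij; rewrite !inordK; [by case| |].
  - by have := ltn_ord j; lia.
  - by have := ltn_ord i; lia.
have Hsub : B \subset X :|: T1 @: X :|: T2 @: X.
  apply/subsetP => b /imsetP [i _ Hbi].
  have : b \in outballS 1 X by rewrite (eqP HX) inE.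
  move/bigcupP => [x Hx Hb].
  have Hbv : nat_of_ord b = i.+1 by rewrite Hbi inordK //; have := ltn_ord i; lia.
  case: (@outball1P (Gr n) x b Hb) => [->|]; first by rewrite !inE Hx.
  rewrite Gr_arc => /orP [/andP [_ h]|/and4P [_ _ _ /orP [] /eqP h]].
  - by have := ltn_ord i; rewrite Hbv in h; lia.
  - rewrite !inE; apply/orP; left; apply/orP; right; apply/imsetP; exists x => //.
    by rewrite -[b]inord_val h.
  - rewrite !inE; apply/orP; right; apply/imsetP; exists x => //.
    by rewrite -[b]inord_val h.
have := subset_leq_card Hsub; rewrite HB => h.
apply: (leq_trans h); apply: leq_trans (leq_card_setU _ _) _.
have h2 := leq_imset_card T2 X.
apply: leq_trans (leq_add (leq_card_setU _ _) h2) _.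
have h1 := leq_imset_card T1 X.
apply: leq_trans (leq_add (leq_add (leqnn _) h1) (leqnn _)) _.
have E : forall k, k + k + k = 3 * k by move=> k; lia.
by apply: eq_leq; apply: E.
Qed.

Lemma scatP (G : digraph) (Y : {set 'I_(dn G)}) x y u :
  scattered 1 Y -> x \in Y -> y \in Y -> x != y ->
  x \in outball 1 u -> y \in outball 1 u -> False.
Proof.
move=> /forallP /(_ x); rewrite /= => + Hx Hy Hxy Hxu Hyu.
rewrite Hx /= => /forallP /(_ y); rewrite Hy Hxy /= => /existsPn /(_ u).
by rewrite Hxu Hyu.
Qed.

Lemma bnd n a b : 0 < a -> a <= n -> 0 < b -> b <= n -> n.+1 + (a.-1 * n + b.-1) < (n + n * n).+1.
Proof.
case: a => // a; case: b => // b /= _ Ha _ Hb.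
have : a * n <= (n - 1) * n by apply: leq_mul => //; lia.
nia.
Qed.

Lemma pred_lt a n : 0 < a -> a <= n -> a.-1 < n.
Proof. by case: a. Qed.
Lemma pred_add1 a : 0 < a -> a = a.-1 + 1.
Proof. by case: a => // a; rewrite addn1. Qed.

Lemma alpha_ub n (Y : {set 'I_(dn (Gr n))}) : 0 < n -> scattered 1 Y -> #|Y| <= 2.
Proof.
move=> Hn HY.
pose Bs := [set v : 'I_(dn (Gr n)) | 0 < nat_of_ord v <= n].
rewrite -(cardsID Bs Y).
have E : forall a b, a <= 1 -> b <= 1 -> a + b <= 2 by move=> a b; lia.
apply: E.
- apply/card_le1_eqP => x y; rewrite !inE => /andP [Hx /andP [hx1 hx2]] /andP [Hy /andP [hy1 hy2]].
  apply/eqP/negPn/negP => Hxy.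
  pose u := @inord (n + n * n) (n.+1 + ((x.-1) * n + y.-1)).
  have Hu : nat_of_ord u = n.+1 + ((x.-1) * n + y.-1) by rewrite inordK //; apply: bnd.
  have Hsub : nat_of_ord u - n.+1 = (x.-1) * n + y.-1 by rewrite Hu addKn.
  apply: (@scatP (Gr n) Y y x u HY Hy Hx Hxy).
  + apply: outball1_arc; rewrite Gr_arc /arcn; apply/orP; right.
    rewrite Hu hy1 hy2 /= ; apply/andP; split; first by rewrite addSn ltnS leq_addr.
    by rewrite /t2 addKn modnMDl modn_small ?(pred_lt hy1 hy2) // -(pred_add1 hy1) eqxx orbT.
  + apply: outball1_arc; rewrite Gr_arc /arcn; apply/orP; right.
    rewrite Hu hx1 hx2 /= ; apply/andP; split; first by rewrite addSn ltnS leq_addr.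
    by rewrite /t1 addKn divnMDl // divn_small ?(pred_lt hy1 hy2) // addn0 -(pred_add1 hx1) eqxx.
- apply/card_le1_eqP => x y; rewrite !inE => /andP [Hx' Hx] /andP [Hy' Hy].
  apply/eqP/negPn/negP => Hxy.
  have Hin : forall v : 'I_(dn (Gr n)), ~~ (0 < nat_of_ord v <= n) -> v \in @outball (Gr n) 1 (inord 0).
    move=> v Hv; case: (posnP (nat_of_ord v)) => Hv0.
      have -> : v = @inord (n + n * n) 0 by apply: ord_inj; rewrite inordK.
      exact: (@outball1_self (Gr n) _).
    apply: (@outball1_arc (Gr n)); rewrite Gr_arc /arcn inordK // eqxx /=.
    by move: Hv; rewrite Hv0 /= -ltnNge => ->.
  exact: (@scatP (Gr n) Y y x _ HY Hy Hx Hxy (Hin _ Hy') (Hin _ Hx')).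
Qed.

Lemma alpha_eq n : 0 < n -> alpha 1 (Gr n) = 2.
Proof.
move=> Hn; apply/eqP; rewrite eqn_leq; apply/andP; split.
  by apply/bigmax_leqP => Y HY; apply: alpha_ub.
pose s : 'I_(dn (Gr n)) := inord 0.
pose b : 'I_(dn (Gr n)) := inord 1.
have Hs : nat_of_ord s = 0 by rewrite inordK.
have Hb : nat_of_ord b = 1 by rewrite inordK //; lia.
have Hsb : s != b by apply/eqP => /(congr1 (@nat_of_ord _)); rewrite Hs Hb.
have Hnc : forall u, s \in outball 1 u -> b \in outball 1 u -> False.
  move=> u /(@outball1P (Gr n)) [Eu|]; last by rewrite Gr_arc Hs arcn_to0.
  rewrite -Eu => /(@outball1P (Gr n)) [/(congr1 (@nat_of_ord _))|]; first by rewrite Hs Hb.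
  by rewrite Gr_arc Hs Hb /arcn; case/orP => [/andP [_ h]|/and4P [h _ _ _]]; lia.
have HY0 : scattered 1 [set s; b].
  apply/forallP => x; apply/implyP => Hx; apply/forallP => y; apply/implyP => Hy; apply/implyP => Hxy.
  apply/existsPn => u; apply/negP => /andP [Hxu Hyu].
  move: Hx Hy Hxy Hxu Hyu; rewrite !in_set2 => /orP [] /eqP -> /orP [] /eqP ->; rewrite ?eqxx //.
  - by move=> _; apply: Hnc.
  - by move=> _ H1 H2; apply: (Hnc u H2 H1).
apply: leq_trans (leq_bigmax_cond _ HY0).
by rewrite cards2 Hsb.
Qed.

Theorem mainTheorem6 :
  exists C : digraph -> Prop,
    [/\ bounded_expansion C,
        (forall c : nat, infinitely_many (fun G => C G /\ c <= gamma 1 G)) &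
        (forall G, C G -> alpha 1 G = 2)].
Proof.
exists (fun G => exists n, G = Gr n.+1); split.
- exists (fun _ => 3%:R)%R => r G H [n ->] Hm.
  by rewrite -natrM ler_nat; apply: minor_bound Hm.
- move=> c s.
  pose M := foldr (fun G acc => maxn (dn G) acc) 0 s.
  have HM : forall G, List.In G s -> dn G <= M.
    rewrite /M; clear M; elim: s => [|G0 s IH] G //= [->|/IH h].
    - exact: leq_maxl.
    - exact: leq_trans h (leq_maxr _ _).
  pose n := 3 * c + M.
  exists (Gr n.+1); split; [split; first by exists n|].
  + rewrite /gamma; apply: (big_ind (fun k => c <= k)).
    * rewrite /= /n; lia.
    * by move=> a a' ha ha'; rewrite leq_min ha ha'.
    * move=> X HX; have := gamma_lb HX; rewrite /n; lia.
  + move=> /HM; rewrite /= /n; lia.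
- by move=> G [n ->]; apply: alpha_eq.
Qed.
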